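(* In the setting of the context, assume (G1), (G2), (G3). Let $M:=(2c_D^2c^2c_1^2)\vee(3cc_2)$, let $k\in\mathbb N$ with $M\le M_0^k$ and $\alpha_0^k<1/4$, put $\alpha_M:=\alpha_0^k$ and let $0<\alpha\le\alpha_M$. Then there exists $\delta_0>0$ such that for every $x\in X_0$ and $0<r<R_0(x)$, $$\mu_x^{U(x,\alpha^2r)}(U(x,r))>\delta_0.$$
   Context: $(X,\rho)$ separable metric space, $X_0\subseteq X$ open; $\mathcal M(X)$ finite Borel measures (extended to universally measurable sets), $\|\mu\|=\mu(X)$, $\varepsilon_x$ Dirac measure. For every open $U\subseteq X$ and $x\in X$ a measure $\mu_x^U\in\mathcal M(X)$ is given such that for all open $U,V$ and $x$: $\mu_x^U(U)=0$, $\|\mu_x^U\|\le1$, $\mu_x^U=\varepsilon_x$ if $x\notin U$; $y\mapsto\mu_y^U(E)$ universally measurable for Borel $E$; $\mu_x^U=\int\mu_y^U\,d\mu_x^V(y)$ if $V\subseteq U$. For closed $A$, $\varepsilon_x^A:=\mu_x^{X\setminus A}$. $\mathcal U(X_0)$: open $U$ with $\overline U\subseteq X_0$; $U(x,r)$ open ball; $R_0(x):=\sup\{r>0:\overline{U(x,r)}\subseteq X_0\}$. $G\colon X\times X\to(0,\infty]$ Borel, $G\mu(x)=\int G(x,y)d\mu(y)$, $\operatorname{cap}A:=\sup\{\|\mu\|:\mu\in\mathcal M(X),\mu(X\setminus A)=0,G\mu\le1\}$. (G1): there is $c_1\ge1$ such that for all $U\in\mathcal U(X_0)$, $x\in U$,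 $\delta>0$, closed $A\subseteq U$ there are a closed neighborhood $B\subseteq U$ of $A$ and a measure $\nu$ carried by $B$ with $\|\varepsilon_x^B\|-\delta<c_1\|\varepsilon_x^A\|$ and $\|\varepsilon_y^A\|\le G\nu(y)\le c_1\|\varepsilon_y^B\|$ for all $y$. (G2): there are a strictly decreasing continuous $g\colon[0,\infty)\to(0,\infty]$ and $c,c_D,M_0\in[1,\infty)$, $\alpha_0\in(0,1)$ with $g(r/2)\le c_Dg(r)$, $M_0g(r)\le g(\alpha_0r)$ for all $r>0$ and $c^{-1}g\circ\rho\le G\le c\,g\circ\rho$. (G3): there is $c_2\ge1$ with $\operatorname{cap}U(x,r)\ge c_2^{-1}g(r)^{-1}$ for all $x\in X_0$, $0<r<R_0(x)$. *)

(* Defs.v *)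
From HB Require Import structures.
From mathcomp Require Import all_boot all_order all_algebra.
From mathcomp Require Import all_classical all_reals all_analysis.
From mathcomp Require Import measurable_realfun.
Set Implicit Arguments. Unset Strict Implicit. Unset Printing Implicit Defensive.
Import Order.TTheory GRing.Theory Num.Theory.
Import numFieldNormedType.Exports.
Local Open Scope classical_set_scope.
Local Open Scope ring_scope.

Section Defs.
Context {R : realType} {X : Type} (rho : X -> X -> R).

Definition is_metric : Prop :=
  [/\ forall x y, 0 <= rho x y,
      forall x y, rho x y = 0 <-> x = y,
      forall x y, rho x y = rho y x &
      forall x y z, rho x z <= rho x y + rho y z].

Definition rball (x : X) (r : R) : set X := [set y | rho x y < r].

Definition separable_rho : Prop :=
  exists D : set X, countable D /\
    forall x (r : R), 0 < r -> exists y, D y /\ rho x y < r.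

Definition ropen (U : set X) : Prop :=
  forall x, U x -> exists2 r : R, 0 < r & rball x r `<=` U.

Definition rclosed (A : set X) : Prop := ropen (~` A).

Definition rclosure (U : set X) : set X :=
  [set x | forall r : R, 0 < r -> exists y, U y /\ rho x y < r].

Definition rnbhd_of (A B : set X) : Prop :=
  forall a, A a -> exists2 r : R, 0 < r & rball a r `<=` B.

Definition calU (X0 U : set X) : Prop := ropen U /\ rclosure U `<=` X0.

Definition R0 (X0 : set X) (x : X) : \bar R :=
  ereal_sup [set r%:E | r in [set r : R | 0 < r /\ rclosure (rball x r) `<=` X0]].
End Defs.

Section Meas.
Context {R : realType} {d : measure_display} {X : measurableType d}.

(* universally measurable sets: measurable for the completion of
   every finite (Borel) measure *)
Definition umeasurable (S : set X) : Prop :=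
  forall m : {measure set X -> \bar R}, (m setT < +oo)%E ->
    exists B1 B2 : set X, [/\ measurable B1, measurable B2,
      B1 `<=` S, S `<=` B2 & m (B2 `\` B1) = 0%E].

Definition umeasurable_fun (f : X -> \bar R) : Prop :=
  forall a : R, umeasurable [set y | (f y < a%:E)%E].

Definition meas_eq (m1 m2 : {measure set X -> \bar R}) : Prop :=
  forall E, measurable E -> m1 E = m2 E.

Definition Gpot (G : X -> X -> \bar R) (m : {measure set X -> \bar R}) (x : X)
  : \bar R := (\int[m]_y G x y)%E.

Definition cap (G : X -> X -> \bar R) (A : set X) : \bar R :=
  ereal_sup [set m setT | m in [set m : {measure set X -> \bar R} |
     (m setT < +oo)%E /\ m (~` A) = 0%E /\ forall x, (Gpot G m x <= 1)%E]].
End Meas.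

(* Main.v *)
Require Import Defs.
From HB Require Import structures.
From mathcomp Require Import all_boot all_order all_algebra.
From mathcomp Require Import all_classical all_reals all_analysis.
From mathcomp Require Import measurable_realfun.
From mathcomp Require Import lra ring.
Import Order.TTheory GRing.Theory Num.Theory.
Import numFieldNormedType.Exports.
Local Open Scope classical_set_scope.
Local Open Scope ring_scope.
Local Open Scope ereal_scope.

Section mfin.
Context d (T : measurableType d) (R : realType).
Variables (m : {measure set T -> \bar R}) (Hm : m setT < +oo).
Definition mfin : set T -> \bar R := let _ := Hm in fun A => m A.
HB.instance Definition _ := isMeasure.Build _ _ _ mfin
  (measure0 m) (@measure_ge0 _ _ _ m) (@measure_semi_sigma_additive _ _ _ m).
Let fin : fin_num_fun mfin.
Proof.
move=> A mA; rewrite ge0_fin_numE//; apply: le_lt_trans Hm.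
by apply: le_measure => //; rewrite inE.
Qed.
HB.instance Definition _ := @Measure_isFinite.Build _ T _ mfin fin.
End mfin.

Lemma fubT {d} {T : measurableType d} {R : realType}
  (m1 m2 : {measure set T -> \bar R}) (H1 : m1 setT < +oo) (H2 : m2 setT < +oo)
  (f : T * T -> \bar R) : measurable_fun setT f -> (forall p, 0 <= f p) ->
  \int[m1]_x \int[m2]_y f (x, y) = \int[m2]_y \int[m1]_x f (x, y).
Proof.
move=> mf f0.
have := (@fubini_tonelli _ _ _ _ _ (@mfin _ _ _ m1 H1) (@mfin _ _ _ m2 H2) f mf f0).
exact.
Qed.




Lemma le_int0 d (T : measurableType d) (R : realType)
  (m : {measure set T -> \bar R}) (f g : T -> \bar R) :
  (forall x, 0 <= f x) -> (forall x, f x <= g x) ->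
  \int[m]_x f x <= \int[m]_x g x.
Proof.
move=> f0 fg.
have g0 x : 0 <= g x by apply: le_trans (fg x).
rewrite !ge0_integralTE//.
apply: le_ereal_sup => _ [h /= hf <-]; exists h => //= x.
exact: le_trans (hf x) (fg x).
Qed.

Lemma int_lb d (T : measurableType d) (R : realType)
  (m : {measure set T -> \bar R}) (S : set T) (f : T -> \bar R) (a : \bar R) :
  measurable S -> 0 <= a -> (forall z, 0 <= f z) -> (forall z, S z -> a <= f z) ->
  a * m S <= \int[m]_x f x.
Proof.
move=> mS a0 f0 Sf.
have mi : measurable_fun setT (fun x => (\1_S x)%:E : \bar R).
  by apply/measurable_EFinP; exact: measurable_indic.
have h1 : forall z, 0 <= a * (\1_S z)%:E.
  by move=> z; rewrite mule_ge0// lee_fin.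
have h2 : forall z, a * (\1_S z)%:E <= f z.
  move=> z; rewrite indicE; case: (boolP (z \in S)) => [/[!inE] zS|_].
    by rewrite mule1; exact: Sf.
  by rewrite mule0.
apply: le_trans (@le_int0 _ _ _ m (fun z => a * (\1_S z)%:E) f h1 h2).
rewrite ge0_integralZl//.
rewrite integral_indic//.
by rewrite setIT.
Qed.

Lemma int_ub d (T : measurableType d) (R : realType)
  (m : {measure set T -> \bar R}) (B : set T) (f : T -> \bar R) (a : \bar R) :
  measurable B -> 0 <= a -> m (~` B) = 0 -> (forall z, 0 <= f z) ->
  (forall z, B z -> f z <= a) ->
  \int[m]_x f x <= a * m setT.
Proof.
move=> mB a0 mB0 f0 Bf.
have mi : measurable_fun setT (fun x => (\1_(~` B) x)%:E : \bar R).
  by apply/measurable_EFinP; apply: measurable_indic; exact: measurableC.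
apply: le_trans (@le_int0 _ _ _ m f (fun z => a + +oo * (\1_(~` B) z)%:E) f0 _) _.
- move=> z; rewrite indicE; case: (pselect (B z)) => zB.
    have -> : (z \in ~` B) = false by apply/negbTE; rewrite in_setC negbK; exact/mem_set.
    by rewrite mule0 adde0; apply: Bf.
  have -> : (z \in ~` B) = true by exact/mem_set.
  rewrite mule1 addey ?leey//.
  by move: a0; clear; case: a.
- rewrite le_eqVlt; apply/orP; left; apply/eqP.
  have i0 : forall z, [set: T] z -> 0 <= +oo * (\1_(~` B) z)%:E :> \bar R.
    by move=> z _; rewrite mule_ge0// lee_fin.
  have mi' : measurable_fun setT (fun z => +oo * (\1_(~` B) z)%:E : \bar R).
    exact: measurable_funeM.
  have ii := (@ge0_integralD _ _ _ m setT measurableT (fun _ => a)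
     (fun z => +oo * (\1_(~` B) z)%:E) (fun _ _ => a0) (measurable_cst a)
     i0 mi').
  etransitivity; first exact: ii.
  rewrite (integral_cst _ measurableT) ge0_integralZl//.
  rewrite integral_indic; last exact: measurableC.
  by rewrite setIT mB0 mule0 adde0.
  exact: measurableT.
Qed.


Section gfacts.
Context {R : realType} (g : R -> \bar R).
Hypothesis gdec : forall s t : R, (0 <= s)%R -> (s < t)%R -> g t < g s.
Hypothesis gpos : forall {t : R}, (0 <= t)%R -> 0 < g t.

Lemma g_fin t : (0 < t)%R -> g t \is a fin_num.
Proof.
move=> t0; have h1 := gpos (ltW t0).
have h2 : g t < g (t / 2)%R.
  apply: gdec; first by apply: divr_ge0 => //; exact: ltW.
  lra.
rewrite fin_numE; apply/andP; split.
  by apply: contraTneq h1 => ->.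
by apply: contraTneq h2 => ->; rewrite ltNge leey.
Qed.

Lemma g_anti s t : (0 <= s)%R -> (s <= t)%R -> g t <= g s.
Proof.
move=> s0; rewrite le_eqVlt => /orP[/eqP->//|st].
exact/ltW/gdec.
Qed.

Definition gv t := fine (g t).

Lemma gE t : (0 < t)%R -> g t = (gv t)%:E.
Proof. by move=> t0; rewrite /gv fineK// g_fin. Qed.

Lemma gv_pos t : (0 < t)%R -> (0 < gv t)%R.
Proof. by move=> t0; rewrite -lte_fin -gE//; apply: gpos; exact: ltW. Qed.

Lemma gv_anti s t : (0 < s)%R -> (s <= t)%R -> (gv t <= gv s)%R.
Proof.
move=> s0 st; rewrite -lee_fin -!gE//; last exact: lt_le_trans st.
exact: g_anti (ltW s0) st.
Qed.

Lemma gv_half (cD : R) : (forall r : R, (0 < r)%R -> g (r / 2)%R <= cD%:E * g r) ->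
  forall r, (0 < r)%R -> (gv (r / 2) <= cD * gv r)%R.
Proof.
move=> h r r0; rewrite -lee_fin EFinM -!gE//; first exact: h.
by apply: divr_gt0.
Qed.

Lemma gv_iter (M0 alpha0 : R) : (0 <= M0)%R -> (0 < alpha0)%R ->
  (forall r : R, (0 < r)%R -> M0%:E * g r <= g (alpha0 * r)%R) ->
  forall n s, (0 < s)%R -> (M0 ^+ n * gv s <= gv (alpha0 ^+ n * s))%R.
Proof.
move=> M00 a0 h; elim=> [|n IH] s s0; first by rewrite !expr0 !mul1r.
have p : (0 < alpha0 ^+ n * s)%R by rewrite mulr_gt0// exprn_gt0.
rewrite exprS -mulrA (le_trans (_ : _ <= M0 * gv (alpha0 ^+ n * s))%R) //.
  exact: ler_wpM2l (IH _ s0).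
rewrite exprS -mulrA -lee_fin EFinM -!gE//; first exact: h.
by rewrite mulr_gt0.
Qed.
End gfacts.

Section metric.
Context {R : realType} {X : Type} (rho : X -> X -> R).
Hypothesis hm : is_metric rho.
Local Open Scope ring_scope.

Lemma rho_ge0 x y : 0 <= rho x y. Proof. by case: hm. Qed.
Lemma rho_xx x : rho x x = 0. Proof. by case: hm => _ h _ _; apply/h. Qed.
Lemma rho_sym x y : rho x y = rho y x. Proof. by case: hm. Qed.
Lemma rho_tri x y z : rho x z <= rho x y + rho y z. Proof. by case: hm. Qed.

Lemma ball_open x r : ropen rho (rball rho x r).
Proof.
move=> y; rewrite /rball /= => yr.
exists (r - rho x y); first by rewrite subr_gt0.
move=> z; rewrite /rball /= => yz.
have := rho_tri x y z; lra.
Qed.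

Lemma annulus_closed x a b : rclosed rho [set y | a <= rho x y <= b].
Proof.
move=> y /= /negP; rewrite negb_and -!ltNge => /orP[ya|yb].
  exists (a - rho x y); first by rewrite subr_gt0.
  move=> z; rewrite /rball /= => yz /andP[az _].
  have := rho_tri x y z; lra.
exists (rho x y - b); first by rewrite subr_gt0.
move=> z; rewrite /rball /= => yz /andP[_ zb].
have := rho_tri x z y; rewrite (rho_sym z y); lra.
Qed.

Lemma rclosure_mono (U V : set X) : U `<=` V -> rclosure rho U `<=` rclosure rho V.
Proof.
move=> UV x /= h e e0; have [y [Uy xy]] := h e e0.
by exists y; split => //; apply: UV.
Qed.
End metric.

Section arith.

Local Open Scope ring_scope.
Lemma final_arith (R : realType) (c c1 c2 cD P eA eB n sT sU sA gvr2 gvr gv2r gv2t gvt gvat M Mk K : R) :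
  1 <= c -> 1 <= c1 -> 1 <= c2 -> 1 <= cD -> 0 <= n -> 0 <= sU -> 0 <= sA ->
  0 < gvr2 -> 0 < gvr -> 0 < gv2r -> 0 < gv2t -> 0 < gvt -> 0 < gvat ->
  K * (12 * c^+3 * c2 * cD * c1^+2) = 1 ->
  eA <= P + c * gvr2 * n ->
  eB - c1 * K / 2 < c1 * eA ->
  c^-1 * gv2t * n <= c1 * eB ->
  gvr2 <= cD * gvr -> gvr <= cD * gv2r -> Mk * gv2r <= gv2t -> Mk * gvt <= gvat ->
  gvt <= cD * gv2t -> M <= Mk -> 2 * cD ^+ 2 * c ^+ 2 * c1 ^+ 2 <= M -> 3 * c * c2 <= M ->
  c^-1 * gvat * sU <= 1 -> sT <= sU + sA -> sA <= c * c * n ->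
  (2 * (c2 * gvt))^-1 < sT -> K / 2 < P.
Proof.
move=> c1' c11 c21 cD1 n0 sU0 sA0 p1 p2 p3 p4 p5 p6 hK h1 h2 h3 h4 h5 h6 h7 h8 h9 h10 h11 h12 h13 h14 h15.
have c0 : 0 < c by lra.
have q0 : 0 < c2 * gvt by rewrite mulr_gt0//; lra.
have s1 : 3 * c * c2 * gvt <= gvat by nra.
have s2 : gvat * sU <= c.
  have -> : gvat * sU = c * (c^-1 * gvat * sU) by field; lra.
  nra.
have s3 : 3 * c2 * gvt * sU <= 1 by nra.
have s4 : 1 < 2 * (c2 * gvt) * sT.
  have e : (2 * (c2 * gvt))^-1 * (2 * (c2 * gvt)) = 1 by rewrite mulVf//; lra.
  rewrite -[X in X < _]e [X in X < _]mulrC ltr_pM2l //; lra.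
have s5 : 1 < 6 * (c2 * gvt) * sA by nra.
have s6 : 1 < 6 * (c2 * gvt) * (c * c * n) by nra.
have s7 : 1 < 6 * c2 * cD * (c * c) * (gv2t * n).
  have : c2 * gvt * (c * c * n) <= c2 * (cD * gv2t) * (c * c * n).
    apply: ler_wpM2r; first nra.
    apply: ler_wpM2l; lra.
  nra.
have s8 : c * gvr2 * n * (2 * c * c1 ^+ 2) <= gv2t * n.
  apply: (@le_trans _ _ (2 * cD ^+ 2 * c ^+ 2 * c1 ^+ 2 * gv2r * n)).
    have : gvr2 <= cD * cD * gv2r by nra.
    move=> h; rewrite !expr2.
    have hc : 0 <= 2 * c * c * c1 * c1 * n by nra.
    nra.
  apply: ler_wpM2r => //.
  nra.
have s9 : gv2t * n <= c * c1 * eB.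
  have -> : gv2t * n = c * (c^-1 * gv2t * n) by field; lra.
  have : 0 <= c * c1 by nra.
  nra.
set Z := 2 * c * c1 ^+ 2.
set W := gv2t * n.
have s10 : W - c * c1 ^+ 2 * K < P * Z.
  have Z0 : 0 < Z by rewrite /Z; nra.
  have t1 : eA * Z <= P * Z + c * gvr2 * n * Z by nra.
  have cc0 : 0 < c * c1 by nra.
  have t2 : (eB - c1 * K / 2) * (c * c1) < c1 * eA * (c * c1) by rewrite ltr_pM2r.
  have eZ : eA * Z = 2 * (c1 * eA * (c * c1)) by rewrite /Z; ring.
  have eK : (eB - c1 * K / 2) * (c * c1) = c * c1 * eB - c * c1 ^+ 2 * K / 2 by ring.
  move: t1 t2 eZ eK s8 s9; rewrite /W /Z.
  move: (eA * _) (P * _) (c * gvr2 * n * _) (c1 * eA * _) ((eB - _) * _) (c * c1 * eB) (c * c1 ^+ 2 * K) (gv2t * n).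
  move=> a1 a2 a3 a4 a5 a6 a7 a8 u1 u2 u3 u4 u5 u6.
  lra.
have s11 : 1 < 6 * c2 * cD * (c * c) * (P * Z) + 6 * c2 * cD * (c * c) * (c * c1 ^+ 2 * K).
  have hp : 0 < 6 * c2 * cD * (c * c) by rewrite !mulr_gt0 //; lra.
  have : 6 * c2 * cD * (c * c) * (W - c * c1 ^+ 2 * K) < 6 * c2 * cD * (c * c) * (P * Z).
    by rewrite ltr_pM2l.
  rewrite mulrBr.
  move: s7; rewrite -/W.
  move: (6 * c2 * cD * (c * c) * W) (6 * c2 * cD * (c * c) * (c * c1 ^+ 2 * K)) (6 * c2 * cD * (c * c) * (P * Z)).
  move=> b1 b2 b3; lra.
rewrite /Z in s11.
clear -s11 hK c1' c11 c21 cD1.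
have [L eL] : exists L, L = 12 * c ^+ 3 * c2 * cD * c1 ^+ 2 by eexists.
rewrite -eL in hK.
have L0 : 0 < L by rewrite eL !mulr_gt0 ?exprn_gt0 //; lra.
have e1 : 6 * c2 * cD * (c * c) * (P * (2 * c * c1 ^+ 2)) = L * P by rewrite eL; ring.
have e2 : 6 * c2 * cD * (c * c) * (c * c1 ^+ 2 * K) = (K * L) / 2 by rewrite eL; field.
rewrite e1 e2 hK in s11.
have K0 : 0 < K.
  have : K = L^-1.
    have -> : L^-1 = (K * L) / L by rewrite hK mul1r.
    by rewrite mulfK // gt_eqF.
  by move=> ->; rewrite invr_gt0.
have : K * (1/2) < K * (L * P) by rewrite ltr_pM2l //; lra.
rewrite mulrA hK mul1r; lra.
Qed.

End arith.

Theorem proposition4p11 (R : realType) (d : measure_display) (X : measurableType d)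
  (rho : X -> X -> R) (X0 : set X)
  (mu : set X -> X -> {measure set X -> \bar R})
  (G : X -> X -> \bar R)
  (c1 : R) (g : R -> \bar R) (c cD M0 alpha0 : R) (c2 : R)
  (k : nat) (alpha : R) :
  (* (X, rho) separable metric space, measurable sets = Borel sets *)
  is_metric rho -> separable_rho rho ->
  (forall A : set X, measurable A <-> <<s ropen rho >> A) ->
  ropen rho X0 ->
  (* the family of measures mu_x^U *)
  (forall U x, ropen rho U -> mu U x U = 0) ->
  (forall U x, ropen rho U -> mu U x setT <= 1) ->
  (forall U x, ropen rho U -> ~ U x -> meas_eq (mu U x) \d_x) ->
  (forall U E, ropen rho U -> measurable E ->
     umeasurable_fun (fun y => mu U y E)) ->
  (forall U V x, ropen rho U -> ropen rho V -> V `<=` U ->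
     forall E, measurable E -> mu U x E = \int[mu V x]_y mu U y E) ->
  (* the kernel G : X x X -> (0, +oo], Borel *)
  (forall x y, 0 < G x y) ->
  measurable_fun [set: X * X] (fun p : X * X => G p.1 p.2) ->
  (* (G1) *)
  (1 <= c1)%R ->
  (forall (U : set X) (x : X) (delta : R) (A : set X),
     calU rho X0 U -> U x -> (0 < delta)%R -> rclosed rho A -> A `<=` U ->
     exists (B : set X) (nu : {measure set X -> \bar R}),
       [/\ rclosed rho B, B `<=` U & rnbhd_of rho A B] /\
       [/\ nu setT < +oo, nu (~` B) = 0,
           mu (~` B) x setT - delta%:E < c1%:E * mu (~` A) x setT &
           forall y, mu (~` A) y setT <= Gpot G nu y <= c1%:E * mu (~` B) y setT]) ->
  (* (G2) *)
  (forall s t : R, (0 <= s)%R -> (s < t)%R -> g t < g s) ->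
  {within [set t : R | (0 <= t)%R], continuous g} ->
  (forall t : R, (0 <= t)%R -> 0 < g t) ->
  (1 <= c)%R -> (1 <= cD)%R -> (1 <= M0)%R -> (0 < alpha0 < 1)%R ->
  (forall r : R, (0 < r)%R -> g (r / 2)%R <= cD%:E * g r) ->
  (forall r : R, (0 < r)%R -> M0%:E * g r <= g (alpha0 * r)%R) ->
  (forall x y, (c^-1)%R%:E * g (rho x y) <= G x y <= c%:E * g (rho x y)) ->
  (* (G3) *)
  (1 <= c2)%R ->
  (forall (x : X) (r : R), X0 x -> (0 < r)%R -> r%:E < R0 rho X0 x ->
     ((c2 * fine (g r))^-1)%R%:E <= cap G (rball rho x r)) ->
  (* the constants *)
  let M := Num.max (2 * cD ^+ 2 * c ^+ 2 * c1 ^+ 2)%R (3 * c * c2)%R in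
  (M <= M0 ^+ k)%R -> (alpha0 ^+ k < 4^-1)%R ->
  (0 < alpha <= alpha0 ^+ k)%R ->
  exists2 delta0 : R, (0 < delta0)%R &
    forall (x : X) (r : R), X0 x -> (0 < r)%R -> r%:E < R0 rho X0 x ->
      delta0%:E < mu (rball rho x (alpha ^+ 2 * r)%R) x (rball rho x r).
Proof.
move=> hm _ hmeas _ mu0 mu1 mudir _ mubal Gpos Gmeas c1ge G1 gdec _ gpos cge cDge
  M0ge /andP[a00 a01] ghalf giter Gg c2ge G3 M hMk hak /andP[al0 alk].
have mopen U : ropen rho U -> measurable U.
  by move=> hU; apply/hmeas; exact: sub_gen_smallest.
have mclosed A : rclosed rho A -> measurable A.
  by move=> hA; rewrite -(setCK A); exact/measurableC/mopen.
have gE' s : (0 < s)%R -> g s = (gv g s)%:E := fun h => @gE _ g gdec gpos s h.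
have gvp s : (0 < s)%R -> (0 < gv g s)%R := fun h => @gv_pos _ g gdec gpos s h.
have gva s u : (0 < s)%R -> (s <= u)%R -> (gv g u <= gv g s)%R :=
  fun h1 h2 => @gv_anti _ g gdec gpos s u h1 h2.
have c0 : (0 < c)%R by lra.
have c10 : (0 < c1)%R by lra.
have c20 : (0 < c2)%R by lra.
have cD0 : (0 < cD)%R by lra.
have Mk1 : (2 * cD ^+ 2 * c ^+ 2 * c1 ^+ 2 <= M)%R by rewrite /M le_max lexx.
have Mk2 : (3 * c * c2 <= M)%R by rewrite /M le_max lexx orbT.
have al4 : (4 * alpha <= 1)%R by lra.
set K := ((12 * c ^+ 3 * c2 * cD * c1 ^+ 2)^-1)%R.
have L0 : (0 < 12 * c ^+ 3 * c2 * cD * c1 ^+ 2)%R.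
  by rewrite !mulr_gt0 ?exprn_gt0.
have K0 : (0 < K)%R by rewrite invr_gt0.
have hK : (K * (12 * c ^+ 3 * c2 * cD * c1 ^+ 2) = 1)%R by rewrite mulVf // gt_eqF.
exists (K / 2)%R; first by rewrite divr_gt0.
move=> x r X0x r0 rR.
set t := (alpha * r)%R.
have t0 : (0 < t)%R by rewrite mulr_gt0.
have t4 : (4 * t <= r)%R by rewrite /t; nra.
have eat : (alpha ^+ 2 * r = alpha * t)%R by rewrite /t expr2 mulrA.
rewrite eat.
have [r' [[r'0 clr'] tr']] : exists r' : R,
    ((0 < r')%R /\ rclosure rho (rball rho x r') `<=` X0) /\ (2 * t < r')%R.
  have : ((2 * t)%:E < R0 rho X0 x) by apply: lt_trans rR; rewrite lte_fin; lra.
  by move=> /ereal_sup_gt [_ [r'' hr'' <-]]; rewrite lte_fin => h; exists r''.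
have tR : t%:E < R0 rho X0 x by apply: lt_trans rR; rewrite lte_fin; lra.
have U'cal : calU rho X0 (rball rho x (2 * t)).
  split; first exact: ball_open.
  apply: subset_trans clr'; apply: rclosure_mono => y; rewrite /rball /=; lra.
have xU' : rball rho x (2 * t) x by rewrite /rball /= rho_xx //; lra.
set A := [set y | (alpha * t <= rho x y <= t)%R].
have Acl : rclosed rho A := @annulus_closed _ _ rho hm x _ _.
have AU' : A `<=` rball rho x (2 * t).
  by move=> y /andP[_ h]; rewrite /rball /=; lra.
have mA : measurable A := mclosed _ Acl.
set delta := (c1 * K / 2)%R.
have dl0 : (0 < delta)%R by rewrite /delta divr_gt0 // mulr_gt0.
have [B [nu [[Bcl BU' _] [nufin nuB ineqx ineqy]]]] :=
  G1 _ x delta A U'cal xU' dl0 Acl AU'.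
have mB := mclosed _ Bcl.
have carr (m : {measure set X -> \bar R}) (S : set X) :
    measurable S -> m (~` S) = 0 -> m setT = m S.
  move=> mS h; rewrite -(setUv S) (measureU m mS (measurableC mS) (setICr S)).
  by transitivity (m S + 0)%R; [congr (_ + _)%R; exact: h | rewrite addr0].
have nufin' : nu setT \is a fin_num by rewrite ge0_fin_numE.
set n := fine (nu setT).
have nuE : nu setT = n%:E by rewrite fineK.
have n0 : (0 <= n)%R by rewrite -lee_fin -nuE.
have Gp0 m y : 0 <= Gpot G m y.
  by apply: integral_ge0 => z _; exact: ltW (Gpos _ _).
have Glow y z s : (0 < s)%R -> (rho y z <= s)%R -> (c^-1 * gv g s)%:E <= G y z.
  move=> s0 hs; have /andP[h _] := Gg y z; apply: le_trans h.
  rewrite EFinM -gE' //; apply: lee_wpmul2l; first by rewrite lee_fin invr_ge0 ltW.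
  exact: (@g_anti _ g gdec _ _ (rho_ge0 rho hm y z) hs).
have Gup y z s : (0 < s)%R -> (s <= rho y z)%R -> G y z <= (c * gv g s)%:E.
  move=> s0 hs; have /andP[_ h] := Gg y z; apply: (le_trans h).
  rewrite EFinM -gE' //; apply: lee_wpmul2l; first by rewrite lee_fin ltW.
  exact: (@g_anti _ g gdec _ _ (ltW s0) hs).
have Gsym y z : G y z <= (c * c)%:E * G z y.
  have /andP[_ h1] := Gg y z; have /andP[h2 _] := Gg z y.
  apply: (le_trans h1); rewrite (rho_sym rho hm y z) EFinM -muleA.
  apply: lee_wpmul2l; first by rewrite lee_fin ltW.
  apply: le_trans (lee_wpmul2l _ h2); last by rewrite lee_fin ltW.
  by rewrite muleA -EFinM divff ?gt_eqF // mul1e.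
have Gxlb : (c^-1 * gv g (2 * t))%:E * nu setT <= Gpot G nu x.
  rewrite (carr nu B mB nuB); apply: int_lb => //.
  - by rewrite lee_fin mulr_ge0 ?invr_ge0 ?ltW // gvp // mulr_gt0.
  - by move=> z; exact: ltW (Gpos _ _).
  - move=> z Bz; apply: Glow; first by rewrite mulr_gt0.
    by have := BU' _ Bz; rewrite /rball /= => h; exact: ltW.
have Gxub : Gpot G nu x <= c1%:E * mu (~` B) x setT by have /andP[_ ->] := ineqy x.
have far y : ~ rball rho x r y -> mu (~` A) y setT <= (c * gv g (r / 2) * n)%:E.
  move=> ny; have /andP[h _] := ineqy y; apply: (le_trans h).
  rewrite EFinM -nuE; apply: (@int_ub _ _ _ nu B _ _ mB) => //.
  - by rewrite lee_fin mulr_ge0 ?ltW // gvp // divr_gt0.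
  - by move=> z; exact: ltW (Gpos _ _).
  - move=> z Bz; apply: Gup; first by rewrite divr_gt0.
    have := BU' _ Bz; rewrite /rball /= => h1.
    have h2 : ~ (rho x y < r)%R by [].
    have h3 := rho_tri rho hm x z y; rewrite (rho_sym rho hm z y) in h3.
    move/negP: h2; rewrite -leNgt => h2; lra.
have mufin U y E : ropen rho U -> measurable E ->
    mu U y E = (fine (mu U y E))%:E /\ (0 <= fine (mu U y E) <= 1)%R.
  move=> oU mE.
  have h1 : mu U y E <= 1.
    apply: le_trans (mu1 _ y oU); apply: le_measure => //; rewrite inE //.
  have hf : mu U y E \is a fin_num.
    by rewrite ge0_fin_numE // (le_lt_trans h1) // ltey.
  split; first by rewrite fineK.
  by rewrite -!lee_fin fineK // h1 andbT.
set V := rball rho x (alpha * t).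
have oV : ropen rho V := ball_open rho hm x _.
have VA : V `<=` ~` A by move=> y; rewrite /V /rball /= => h /andP[h' _]; lra.
have bal := mubal (~` A) V x Acl oV VA setT measurableT.
set C := (c * gv g (r / 2) * n)%R.
have C0 : (0 <= C)%R by rewrite /C mulr_ge0 // mulr_ge0 ?ltW // gvp // divr_gt0.
have mball : measurable (rball rho x r) := mopen _ (ball_open rho hm x r).
have balb : mu (~` A) x setT <= mu V x (rball rho x r) + C%:E.
  rewrite bal.
  have i0 : forall y, 0 <= mu (~` A) y setT by move=> y; exact: measure_ge0.
  have i1 : forall y, mu (~` A) y setT <= (\1_(rball rho x r) y)%:E + C%:E.
    move=> y; case: (pselect (rball rho x r y)) => hy.
      have -> : (\1_(rball rho x r) y = 1 :> R)%R by rewrite indicE mem_set.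
      apply: le_trans (mu1 _ y Acl) _; rewrite -EFinD lee_fin; lra.
    have -> : (\1_(rball rho x r) y = 0 :> R)%R by rewrite indicE memNset.
    by rewrite add0e; exact: far.
  apply: le_trans (@le_int0 _ _ _ (mu V x) _ _ i0 i1) _.
  have mi : measurable_fun setT (fun y => (\1_(rball rho x r) y)%:E : \bar R).
    by apply/measurable_EFinP; exact: measurable_indic.
  have j0 : forall y, [set: X] y -> 0 <= (\1_(rball rho x r) y)%:E :> \bar R.
    by move=> y _; rewrite lee_fin.
  have j1 : forall y, [set: X] y -> 0 <= (fun=> C%:E) y :> \bar R.
    by move=> y _; rewrite lee_fin.
  have ii := (@ge0_integralD _ _ _ (mu V x) setT measurableT
     (fun y => (\1_(rball rho x r) y)%:E) (fun=> C%:E) j0 mi j1 (measurable_cst _)).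
  apply: (@le_trans _ _ (\int[mu V x]_y (\1_(rball rho x r) y)%:E + \int[mu V x]_y (fun=> C%:E) y)).
    by rewrite le_eqVlt; apply/orP; left; apply/eqP; exact: ii.
  rewrite integral_indic // setIT (integral_cst _ measurableT).
  apply: leeD => //.
  apply: le_trans (lee_wpmul2l _ (mu1 _ x oV)) _; first by rewrite lee_fin.
  by rewrite mule1.
have G3t := G3 x t X0x t0 tR.
have q0 : (0 < c2 * gv g t)%R by rewrite mulr_gt0 // gvp.
have vlt : ((2 * (c2 * gv g t))^-1)%:E < cap G (rball rho x t).
  apply: lt_le_trans G3t; rewrite lte_fin.
  have -> : ((2 * (c2 * gv g t))^-1 = (c2 * gv g t)^-1 / 2)%R.
    by field; rewrite !gt_eqF // gvp.
  have : (0 < (c2 * gv g t)^-1)%R by rewrite invr_gt0.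
  rewrite /gv; lra.
move: vlt => /ereal_sup_gt [_ [sg [sgfin [sgout sgpot]] <-] vlt].
have sgfinS S : measurable S -> sg S = (fine (sg S))%:E /\ (0 <= fine (sg S))%R.
  move=> mS; have h1 : sg S <= sg setT by apply: le_measure => //; rewrite inE.
  have hf : sg S \is a fin_num by rewrite ge0_fin_numE // (le_lt_trans h1).
  by split; [rewrite fineK | rewrite -lee_fin fineK].
have mV : measurable V := mopen _ oV.
have s1 : (c^-1 * gv g (alpha * t))%:E * sg V <= 1.
  apply: le_trans (sgpot x); apply: int_lb => //.
  - by rewrite lee_fin mulr_ge0 ?invr_ge0 ?ltW // gvp // mulr_gt0.
  - by move=> z; exact: ltW (Gpos _ _).
  - move=> z Vz; apply: Glow; first by rewrite mulr_gt0.
    by move: Vz; rewrite /V /rball /= => h; exact: ltW.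
have mbt : measurable (~` rball rho x t) by apply: measurableC; exact/mopen/ball_open.
have s2 : sg setT <= sg V + sg A + sg (~` rball rho x t).
  have sub : setT `<=` (V `|` A) `|` ~` rball rho x t.
    move=> y _; case: (pselect (rball rho x t y)) => hy; last by right.
    left; case: (pselect ((rho x y) < alpha * t)%R) => hy'; first by left.
    right; rewrite /A /=; apply/andP; split; last by move: hy; rewrite /rball /=; lra.
    by rewrite leNgt; apply/negP.
  apply: le_trans (le_measure _ _ _ sub) _.
  - by rewrite inE.
  - by rewrite inE; apply: measurableU => //; exact: measurableU.
  apply: le_trans (measureU2 _ _ _) _.
  - exact: measurableU.
  - exact: mbt.
  apply: leeD => //; exact: measureU2.
have s3 : sg A <= \int[sg]_y Gpot G nu y.
  rewrite -[sg A]mul1e; apply: int_lb => //.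
  move=> y Ay; have /andP[h _] := ineqy y; apply: le_trans h.
  have nA : ~ (~` A) y by move=> /(_ Ay).
  have e1 : mu (~` A) y setT = 1.
    rewrite (mudir (~` A) y Acl nA setT measurableT); exact: diracT.
  by rewrite e1.
have s4 : \int[sg]_y Gpot G nu y = \int[nu]_z \int[sg]_y G y z.
  have := @fubT _ _ _ sg nu sgfin nufin (fun p => G p.1 p.2) Gmeas
    (fun p => ltW (Gpos p.1 p.2)).
  by rewrite /Gpot.
have s5 : \int[nu]_z \int[sg]_y G y z <= (c * c)%:E * nu setT.
  apply: (@int_ub _ _ _ nu setT _ _ measurableT) => //.
  - by rewrite lee_fin mulr_ge0 // ltW.
  - by rewrite setCT measure0.
  - by move=> z; apply: integral_ge0 => y _; exact: ltW (Gpos _ _).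
  move=> z _.
  have k0 : forall y, 0 <= G y z by move=> y; exact: ltW (Gpos _ _).
  apply: le_trans (@le_int0 _ _ _ sg _ (fun y => (c * c)%:E * G z y) k0 (fun y => Gsym y z)) _.
  have mz : measurable_fun setT (fun y => G z y).
    exact: (measurable_fun_pair2 z Gmeas).
  have k1 : forall y, [set: X] y -> 0 <= G z y by move=> y _; exact: ltW (Gpos _ _).
  have ii := @ge0_integralZl_EFin _ _ _ sg setT measurableT (fun y => G z y) k1 mz (c * c)%R.
  rewrite ii; last by rewrite mulr_ge0 // ltW.
  rewrite -[X in _ <= X]mule1; apply: lee_wpmul2l; first by rewrite lee_fin mulr_ge0 // ltW.
  exact: sgpot.
have [PE /andP[P0 P1]] := mufin V x (rball rho x r) oV mball.
have [eAE /andP[eA0 eA1]] := mufin (~` A) x setT Acl measurableT.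
have [eBE /andP[eB0 eB1]] := mufin (~` B) x setT Bcl measurableT.
have [sTE sT0] := sgfinS setT measurableT.
have [sUE sU0] := sgfinS V mV.
have [sAE sA0] := sgfinS A mA.
have gvh s : (0 < s)%R -> (gv g (s / 2) <= cD * gv g s)%R :=
  fun h => @gv_half _ g gdec gpos cD ghalf s h.
have gvi s : (0 < s)%R -> (M0 ^+ k * gv g s <= gv g (alpha0 ^+ k * s))%R :=
  fun h => @gv_iter _ g gdec gpos M0 alpha0 (ltW (lt_le_trans ltr01 M0ge)) a00 giter k s h.
have r2 : (0 < 2 * r)%R by rewrite mulr_gt0.
have t2 : (0 < 2 * t)%R by rewrite mulr_gt0.
have at0 : (0 < alpha * t)%R by rewrite mulr_gt0.
have h1 : (fine (mu (~` A) x setT) <= fine (mu V x (rball rho x r)) + c * gv g (r / 2) * n)%R.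
  by move: balb; rewrite eAE PE -EFinD lee_fin.
have h2 : (fine (mu (~` B) x setT) - c1 * K / 2 < c1 * fine (mu (~` A) x setT))%R.
  by move: ineqx; rewrite eAE eBE -EFinB -EFinM lte_fin.
have h3 : (c^-1 * gv g (2 * t) * n <= c1 * fine (mu (~` B) x setT))%R.
  by move: (le_trans Gxlb Gxub); rewrite eBE nuE -!EFinM lee_fin.
have h5 : (gv g r <= cD * gv g (2 * r))%R.
  by have := gvh _ r2; rewrite (_ : 2 * r / 2 = r)%R //; field.
have h6 : (M0 ^+ k * gv g (2 * r) <= gv g (2 * t))%R.
  apply: le_trans (gvi _ r2) _; apply: gva => //; rewrite /t; nra.
have h7 : (M0 ^+ k * gv g t <= gv g (alpha * t))%R.
  apply: le_trans (gvi _ t0) _; apply: gva => //; nra.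
have h8 : (gv g t <= cD * gv g (2 * t))%R.
  by have := gvh _ t2; rewrite (_ : 2 * t / 2 = t)%R //; field.
have h12 : (c^-1 * gv g (alpha * t) * fine (sg V) <= 1)%R.
  by move: s1; rewrite sUE -EFinM lee_fin.
have h13 : (fine (sg setT) <= fine (sg V) + fine (sg A))%R.
  by move: s2; rewrite sgout adde0 sTE sUE sAE -EFinD lee_fin.
have h14 : (fine (sg A) <= c * c * n)%R.
  move: s3; rewrite s4 => /le_trans /(_ s5).
  by rewrite sAE nuE -EFinM lee_fin.
have h15 : ((2 * (c2 * gv g t))^-1 < fine (sg setT))%R by move: vlt; rewrite sTE lte_fin.
rewrite PE lte_fin.
have rh : (0 < r / 2)%R by rewrite divr_gt0.
have fa := @final_arith R c c1 c2 cD (fine (mu V x (rball rho x r)))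
  (fine (mu (~` A) x setT)) (fine (mu (~` B) x setT)) n (fine (sg setT)) (fine (sg V))
  (fine (sg A)) (gv g (r / 2)) (gv g r) (gv g (2 * r)) (gv g (2 * t)) (gv g t)
  (gv g (alpha * t)) M (M0 ^+ k) K cge c1ge c2ge cDge n0 sU0 sA0 (gvp _ rh).
have fb := fa (gvp _ r0) (gvp _ r2) (gvp _ t2) (gvp _ t0) (gvp _ at0) hK.
have fc := fb h1 h2 h3 (gvh _ r0) h5 h6 h7 h8 hMk Mk1 Mk2.
have fd := fc h12 h13 h14 h15.
exact: fd.
Qed.
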